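(* Let $\mathcal{F}_s$ be as below and let $E_s$ be the number of forms $f\in\mathcal{F}_s$ such that $-3D(f)$ is imaginary or unusual with $\mathrm{sgn}(-3D(f))\in\{1,h\}$, the Hessian $H_f=(P,Q,R)$ is partially reduced, and $\deg(P)=\deg(R)$. Then $E_s\le\frac{q+1}{2}q^s$ if $s\equiv0\pmod 4$, and $E_s=0$ if $s\not\equiv0\pmod4$.
   Context: $q$ is a prime power with $\gcd(q,6)=1$; for nonzero $H\in\mathbb{F}_q[t]$, $|H|=q^{\deg H}$, $\mathrm{sgn}(H)$ = leading coefficient, $|0|=0$. A binary cubic form $(a,b,c,d)$ is $ax^3+bx^2y+cxy^2+dy^3$ over $\mathbb{F}_q[t]$, irreducible, with discriminant $D(f)=18abcd+b^2c^2-4ac^3-4b^3d-27a^2d^2$ and Hessian $(P,Q,R)$, $P=b^2-3ac$, $Q=bc-9ad$, $R=c^2-3bd$ (a binary quadratic form $Px^2+Qxy+Ry^2$ of discriminant $-3D(f)$). $\Delta$ is imaginary if $\deg\Delta$ odd and unusual if $\deg\Delta$ even and $\mathrm{sgn}(\Delta)$ a non-square in $\mathbb{F}_q^*$. Fix a primitive root $h$ of $\mathbb{F}_q^*$, $S=\{h^i:0\le i\le(q-3)/2\}$. A binary quadratic form $(A,B,C)$ is partially reduced if $|B|<|A|\le|C|$; if $|A|<|C|$ then $\mathrm{sgn}(A)\in\{1,h\}$, if $|A|=|C|$ then $\mathrm{sgn}(A)=1$; and $B\ne0$ implies $\mathrm{sgn}(B)\in S$. $\mathcal{F}_s$ is the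 set of binary cubic forms $f=(a,b,c,d)$ with $\deg D(f)=s$, $\deg a\le s/4$, $\deg b\le s/4$, $\deg(ad)\le s/2$, $\deg(bc)\le s/2$, and $\mathrm{sgn}(a)\in S$. *)

(* Defs.v *)
From HB Require Import structures.
From mathcomp Require Import all_boot all_order all_algebra.
Set Implicit Arguments. Unset Strict Implicit. Unset Printing Implicit Defensive.
Import GRing.Theory.
Local Open Scope ring_scope.

Section Defs.
Variable F : finFieldType.

Definition absq (p : {poly F}) : nat :=
  if p == 0 then 0%N else (#|F| ^ (size p).-1)%N.

Definition sgn (p : {poly F}) : F := lead_coef p.

(* "k * deg p <= n", i.e. deg p <= n/k (true for p = 0, deg 0 = -oo) *)
Definition degle (p : {poly F}) (k n : nat) : bool :=
  (p == 0) || ((size p).-1 * k <= n)%N.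

Definition primitive_root (h : F) : Prop :=
  forall x : F, x != 0 -> exists i : nat, x = h ^+ i.

Definition inS (h x : F) : Prop :=
  exists2 i : nat, (i <= (#|F| - 3)./2)%N & x = h ^+ i.

Definition cubic_form := ({poly F} * {poly F} * {poly F} * {poly F})%type.
Definition fa (f : cubic_form) := f.1.1.1.
Definition fb (f : cubic_form) := f.1.1.2.
Definition fc (f : cubic_form) := f.1.2.
Definition fd (f : cubic_form) := f.2.

Definition disc (f : cubic_form) : {poly F} :=
  let a := fa f in let b := fb f in let c := fc f in let d := fd f in
  18 * a * b * c * d + b ^+ 2 * c ^+ 2 - 4 * a * c ^+ 3
    - 4 * b ^+ 3 * d - 27 * a ^+ 2 * d ^+ 2.

Definition hessP (f : cubic_form) := fb f ^+ 2 - 3 * fa f * fc f.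
Definition hessQ (f : cubic_form) := fb f * fc f - 9 * fa f * fd f.
Definition hessR (f : cubic_form) := fc f ^+ 2 - 3 * fb f * fd f.

Definition irreducible_form (f : cubic_form) : Prop :=
  fa f != 0 /\
  irreducible_poly
    (Poly [:: FracField.tofrac (fd f); FracField.tofrac (fc f);
              FracField.tofrac (fb f); FracField.tofrac (fa f)]
      : {poly {fraction {poly F}}}).

Definition is_square (x : F) : Prop := exists y : F, x = y ^+ 2.

Definition imaginary (D : {poly F}) : Prop := D != 0 /\ odd (size D).-1.
Definition unusual (D : {poly F}) : Prop :=
  D != 0 /\ ~~ odd (size D).-1 /\ ~ is_square (sgn D).

Definition partially_reduced (h : F) (A B C : {poly F}) : Prop :=
  [/\ (absq B < absq A)%N, (absq A <= absq C)%N,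
      ((absq A < absq C)%N -> sgn A = 1 \/ sgn A = h),
      (absq A = absq C -> sgn A = 1) &
      (B != 0 -> inS h (sgn B))].

Definition in_Fs (h : F) (s : nat) (f : cubic_form) : Prop :=
  [/\ irreducible_form f,
      disc f != 0 /\ (size (disc f)).-1 = s,
      degle (fa f) 4 s /\ degle (fb f) 4 s,
      degle (fa f * fd f) 2 s /\ degle (fb f * fc f) 2 s &
      inS h (sgn (fa f))].

Definition counted (h : F) (s : nat) (f : cubic_form) : Prop :=
  let Delta := - 3 * disc f in
  [/\ in_Fs h s f,
      (imaginary Delta \/ unusual Delta) /\ (sgn Delta = 1 \/ sgn Delta = h),
      partially_reduced h (hessP f) (hessQ f) (hessR f) &
      size (hessP f) = size (hessR f)].

End Defs.

(* Main.v *)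
Require Import Defs.
From Stdlib Require Import Ring Lia Arith.
Lemma numlem (s n sa sb sc sd x y u v : nat) :
 n >= 1 -> s + 2 = 2*n -> sa >= 1 -> 4*(sa-1) <= s -> (sb = 0 \/ 4*(sb-1) <= s) ->
 (sd = 0 \/ 2*(sa+sd-2) <= s) -> (sb = 0 \/ sc = 0 \/ 2*(sb+sc-2) <= s) ->
 (sb = 0 /\ x = 0 \/ sb >= 1 /\ x = 2*sb - 1) ->
 (sc = 0 /\ y = 0 \/ sc >= 1 /\ y = sa + sc - 1) ->
 (sc = 0 /\ u = 0 \/ sc >= 1 /\ u = 2*sc-1) ->
 ((sb = 0 \/ sd = 0) /\ v = 0 \/ sb >= 1 /\ sd >= 1 /\ v = sb+sd-1) ->
 (n <= x \/ n <= y) -> (y <= n \/ y <= x) -> (n <= u \/ n <= v) -> (u <= n \/ u <= v) -> (v <= n \/ v <= u) ->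
 exists k, s = 4*k /\ sa <= k+1 /\ sb <= k+1 /\ sc <= k+1 /\ sd <= k+1.
Proof.
intros H1 H2 H3 H4 H5 H6 H7 H8 H9 H10 H11 H12 H13 H14 H15 H16.
assert (Hx : x <= n) by (clear - H2 H5 H8; destruct H5; destruct H8 as [[]|[]]; lia).
assert (Hy : y <= n) by (clear - Hx H13; destruct H13; lia).
assert (Hxy : x = n \/ y = n) by (clear - Hx Hy H12; destruct H12; lia).
clear H12 H13.
assert (Hc : sc = 0 \/ 2*(sc-1) <= n - 1).
{ destruct (Nat.le_gt_cases (2*(sc-1)) (n-1)) as [|Hg]; [right; lia|exfalso].
  assert (Hsc : sc >= 1) by (clear - Hg; lia).
  assert (Hu : u = 2*sc-1) by (clear - Hsc H10; destruct H10 as [[]|[]]; lia).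
  assert (Hv : v = u) by (clear - Hu Hg H15 H16; destruct H15; destruct H16; lia).
  assert (Hbd : sb >= 1 /\ sd >= 1 /\ v = sb+sd-1) by (clear - Hv Hu Hsc H11; destruct H11 as [[[?|?] ?]|[? [? ?]]]; lia).
  destruct Hbd as [Hb1 [Hd1 Hv']].
  destruct Hxy as [Hx'|Hy'].
  - assert (x = 2*sb-1) by (clear - Hb1 H8; destruct H8 as [[]|[]]; lia).
    clear - H7 Hb1 Hsc Hg Hx' H2 H1 H.
    destruct H7 as [|[|]]; lia.
  - assert (y = sa+sc-1) by (clear - Hsc H9; destruct H9 as [[]|[]]; lia).
    clear - H H6 H5 Hd1 Hb1 Hv Hv' Hu Hy' Hg H1 H2 H3.
    destruct H6; [lia|]. destruct H5; lia. }
assert (Hd : sb = 0 \/ sd = 0 \/ sb + sd <= n + 1).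
{ clear - Hc H10 H11 H16 H1 H2.
  destruct H11 as [[[?|?] ?]|[? [? ?]]]; try lia.
  all: right; right; assert (u <= n) by (clear - Hc H10 H1; destruct Hc as [|Hc]; destruct H10 as [[]|[]]; lia).
  all: destruct H16; lia. }
destruct (Nat.Even_or_Odd n) as [[j Hj]|[j Hj]].
- exfalso. destruct Hxy as [Hx'|Hy'].
  + clear - Hx' H8 Hj H1. destruct H8 as [[]|[]]; lia.
  + clear - Hy' H9 Hc H4 Hj H1 H2 H3. destruct H9 as [[]|[]]; [lia|]. destruct Hc; lia.
- exists j. split; [clear - H2 Hj; lia|]. split; [clear - H4 H2 Hj; lia|].
  assert (Hb: sb <= j+1) by (clear - H5 H2 Hj; destruct H5; lia). split; [exact Hb|].
  assert (Hc': sc <= j+1) by (clear - Hc Hj; destruct Hc; lia). split; [exact Hc'|].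
  destruct Hd as [Hd|[Hd|Hd]]; [|clear - Hd; lia|].
  + destruct Hxy as [Hx'|Hy'].
    * clear - Hx' H8 Hd H1. destruct H8 as [[]|[]]; lia.
    * clear - Hy' H9 H6 Hj H2 H3 H4 Hc'. destruct H9 as [[]|[]]; [lia|]. destruct H6; lia.
  + destruct Hxy as [Hx'|Hy'].
    * clear - Hx' H8 Hd Hj. destruct H8 as [[]|[]]; lia.
    * clear - Hy' H9 H6 Hj H2 H3 H4 Hc'. destruct H9 as [[]|[]]; [lia|]. destruct H6; lia.
Qed.

From HB Require Import structures.
From mathcomp Require Import all_boot all_order all_algebra all_field.
Set Implicit Arguments. Unset Strict Implicit. Unset Printing Implicit Defensive.
Import GRing.Theory.
Local Open Scope ring_scope.

Lemma charp_ndvd (F : finFieldType) (p : nat) : prime p -> ~~ (p %| #|F|)%N -> (p%:R : F) != 0.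
Proof.
move=> pp ndv; apply/negP => p0.
have pc : p \in [pchar F] by rewrite inE pp p0.
have := card_pprimeChar pc.
set n := logn _ _ => E.
move: ndv; rewrite [#|F|](_ : _ = (p ^ n)%N) //.
case: n E => [|n] E.
  by move=> _; have := finNzRing_gt1 F; rewrite [#|F|]E.
by rewrite expnS dvdn_mulr.
Qed.

Lemma char23 (F : finFieldType) : coprime #|F| 6 -> (2%:R : F) != 0 /\ (3%:R : F) != 0.
Proof.
move=> cop; split; apply: charp_ndvd => //; apply/negP => dv.
  have : (2 %| gcdn #|F| 6)%N by rewrite dvdn_gcd dv.
  by rewrite (eqP cop).
have : (3 %| gcdn #|F| 6)%N by rewrite dvdn_gcd dv.
by rewrite (eqP cop).
Qed.


Ltac nlia := repeat match goal with H : is_true (leq _ _) |- _ => move/leP: H => H end;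
  try (match goal with |- is_true (leq _ _) => apply/leP end); unfold addn, subn, muln, double in *; lia.


Lemma prim_order (F : finFieldType) (h : F) (n : nat) :
  primitive_root h -> (0 < n)%N -> h ^+ n = 1 -> (#|F|.-1 <= n)%N.
Proof.
move=> ph n0 hn.
apply: (@leq_trans #|codom (fun i : 'I_n => h ^+ i)|).
  rewrite -(cardC1 (0:F)); apply: subset_leq_card; apply/subsetP => x.
  rewrite !inE => x0; apply/codomP; have [i ->] := ph x x0.
  exists (Ordinal (ltn_pmod i n0)).
  by rewrite /= {1}(divn_eq i n) exprD mulnC exprM hn expr1n mul1r.
by rewrite -[n in (_ <= n)%N]card_ord; apply: leq_image_card.
Qed.

Lemma two_neq_opp1 (F : fieldType) : (2%:R : F) != 0 -> (-1 : F) != 1.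
Proof.
move=> t; apply/eqP => e; move/eqP: t; apply.
by rewrite mulr2n -{1}e addNr.
Qed.

Lemma prim_neq0 (F : finFieldType) (h : F) : primitive_root h -> (2%:R : F) != 0 -> h != 0.
Proof.
move=> ph t; apply/eqP => h0.
have m1 : (-1 : F) != 0 by rewrite oppr_eq0 oner_neq0.
have [[|i] e] := ph _ m1.
  by move: e; rewrite expr0 => /eqP; rewrite (negbTE (two_neq_opp1 t)).
by move/eqP: m1; rewrite e h0 exprS mul0r.
Qed.

Lemma inS_opp (F : finFieldType) (h x : F) : primitive_root h -> (2%:R : F) != 0 ->
  inS h x -> inS h (- x) -> False.
Proof.
move=> ph t.
have hn := prim_neq0 ph t.
have key : forall i j, (i <= (#|F| - 3)./2)%N -> (j <= (#|F| - 3)./2)%N ->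
    (i <= j)%N -> - h ^+ i = h ^+ j -> False.
  move=> i j hi hj ij e.
  have e1 : h ^+ (j - i) = -1.
    apply: (mulfI (expf_neq0 i hn)); rewrite -exprD subnKC // -e.
    by rewrite mulrN1.
  case E: (j - i)%N => [|d].
    by move: e1; rewrite E expr0 => /eqP; rewrite eq_sym (negbTE (two_neq_opp1 t)).
  have := prim_order ph (isT : (0 < d.+1 + d.+1)%N).
  rewrite exprD -E e1 mulrNN mulr1 => /(_ erefl).
  have : (j - i <= (#|F| - 3)./2)%N by apply: leq_trans (leq_subr _ _) hj.
  rewrite E => le.
  have dbl : (((#|F| - 3)./2).*2 <= #|F| - 3)%N.
    by rewrite -{2}(odd_double_half (#|F| - 3)) leq_addl.
  move: le dbl; rewrite -!addnn; move: ((#|F| - 3)./2) (#|F|) => m q.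
  move=> ? ? ?; nlia.
move=> [i hi ->] [j hj].
have [ij|ji] := leqP i j.
  by apply: (key i j).
move=> e; apply: (key j i hj hi (ltnW ji)).
by rewrite -e opprK.
Qed.


Lemma coefM_mid (R : nzRingType) (x y : {poly R}) k :
  (size x <= k.+1)%N -> (size y <= k.+1)%N -> (x * y)`_(k + k) = x`_k * y`_k.
Proof.
move=> sx sy.
have kk : (k < (k + k).+1)%N by rewrite ltnS leq_addr.
rewrite coefM (bigD1 (Ordinal kk)) //= addnK big1 ?addr0 // => j /eqP neq.
case: (ltngtP j k) => [lt|gt|eq].
- rewrite [y`_ _]nth_default ?mulr0 //; apply: leq_trans sy _.
  move: lt; move: (nat_of_ord j) => jj lt; nlia.
- by rewrite [x`_ _]nth_default ?mul0r //; apply: leq_trans sx _.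
- by case: neq; apply: val_inj.
Qed.

Lemma size_natmul (F : fieldType) (n : nat) (p : {poly F}) :
  (n%:R : F) != 0 -> size (n%:R * p) = size p.
Proof. by move=> n0; rewrite -polyC_natr mul_polyC size_scale. Qed.

Lemma lead_natmul (F : fieldType) (n : nat) (p : {poly F}) :
  lead_coef (n%:R * p) = n%:R * lead_coef p.
Proof. by rewrite -polyC_natr mul_polyC lead_coefZ. Qed.

Lemma coef_natmul (F : fieldType) (n : nat) (p : {poly F}) i :
  (n%:R * p)`_i = n%:R * p`_i.
Proof. by rewrite -polyC_natr coefCM. Qed.

Lemma size_mul_cases (F : fieldType) (x y : {poly F}) :
  (size x = 0%N \/ size y = 0%N) /\ size (x * y) = 0%N \/
  (1 <= size x)%coq_nat /\ (1 <= size y)%coq_nat /\ size (x * y) = (size x + size y - 1)%coq_nat.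
Proof.
have [->|x0] := eqVneq x (0 : {poly F}); first by left; rewrite mul0r size_poly0; split; [left|].
have [->|y0] := eqVneq y (0 : {poly F}); first by left; rewrite mulr0 size_poly0; split; [right|].
right; rewrite size_mul //.
move: x0 y0; rewrite -!size_poly_gt0 => /leP ? /leP ?; split; [lia|split; [lia|]].
by rewrite -subn1.
Qed.

Lemma cr_theory (R : comPzRingType) :
  @ring_theory R 0 1 +%R *%R (fun x y => x - y) -%R eq.
Proof.
constructor=> //; [exact: add0r|exact: addrC|exact: addrA|exact: mul1r|exact: mulrC|exact: mulrA|exact: mulrDl|exact: subrr].
Qed.

Declare Scope gen_scope.
Section Gen.
Variables (T : Type) (z o : T) (ad mu : T -> T -> T) (op : T -> T).
Hypothesis th : ring_theory z o ad mu (fun x y => ad x (op y)) op eq.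
Add Ring genR : th.
Local Notation "x + y" := (ad x y) : gen_scope.
Local Notation "x * y" := (mu x y) : gen_scope.
Local Notation "- x" := (op x) : gen_scope.
Local Notation "x - y" := (ad x (op y)) : gen_scope.
Local Notation "1" := o : gen_scope.
Local Notation "0" := z : gen_scope.
Local Close Scope ring_scope.
Local Open Scope gen_scope.
Variables (n2 n3 n4 n9 n18 n27 : T).
Hypotheses (e2 : n2 = 1 + 1) (e3 : n3 = 1 + n2) (e4 : n4 = 1 + n3)
  (e9 : n9 = n3 * n3) (e18 : n18 = n2 * n9) (e27 : n27 = n3 * n9).

Lemma gen_disc (a b c d : T) :
  - n3 * (n18 * a * b * c * d + b * b * (c * c) - n4 * a * (c * (c * c))
    - n4 * (b * (b * b)) * d - n27 * (a * a) * (d * d)) =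
  (b * c - n9 * a * d) * (b * c - n9 * a * d) - n4 * ((b * b - n3 * a * c) * (c * c - n3 * b * d)).
Proof using th e2 e3 e4 e9 e18 e27. rewrite ?e27 ?e18 ?e9 ?e4 ?e3 ?e2. ring. Qed.

Lemma gen_conic (A B C D r : T) :
  B * B - 1 + n9 * A * A * r =
  (B * B - n3 * A * C - 1) * (1 - n3 * A * C) + n3 * A * B * (B * C - n9 * A * D)
  - n9 * A * A * (C * C - n3 * B * D - r).
Proof using th e2 e3 e4 e9 e18 e27. rewrite ?e27 ?e18 ?e9 ?e4 ?e3 ?e2. ring. Qed.
Lemma gen_c2 (A r : T) :
  n4 * (- (n9 * A * A * r)) = n9 * (- (n4 * r)) * (A * A).
Proof using th e2 e3 e4 e9 e18 e27. rewrite ?e27 ?e18 ?e9 ?e4 ?e3 ?e2. ring. Qed.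

Lemma gen_c3 (B t K : T) :
  n4 * (B * B - 1) - K * ((t * (B + 1)) * (t * (B + 1))) =
  (B + 1) * (n4 * (B - 1) - K * (t * t) * (B + 1)).
Proof using th e2 e3 e4 e9 e18 e27. rewrite ?e27 ?e18 ?e9 ?e4 ?e3 ?e2. ring. Qed.

Lemma gen_c4 (B L : T) :
  B * (n4 - L) - (n4 + L) = n4 * (B - 1) - L * (B + 1).
Proof using th e2 e3 e4 e9 e18 e27. rewrite ?e27 ?e18 ?e9 ?e4 ?e3 ?e2. ring. Qed.

Lemma gen_c5 (t : T) :
  (n2 * n2) = n4 /\ (n3 * t) * (n3 * t) = n9 * (t * t).
Proof using th e2 e3 e4 e9 e18 e27. rewrite ?e27 ?e18 ?e9 ?e4 ?e3 ?e2. split; ring. Qed.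
End Gen.

Lemma nums (R : comPzRingType) :
  (2%:R = 1 + 1 :> R) /\ (3%:R = 1 + 2%:R :> R) /\ (4%:R = 1 + 3%:R :> R) /\
  (9%:R = 3%:R * 3%:R :> R) /\ (18%:R = 2%:R * 9%:R :> R) /\ (27%:R = 3%:R * 9%:R :> R).
Proof. split; first by rewrite mulr2n. by do !split; rewrite ?nat1r -?natrM. Qed.

Lemma disc_id (R : comPzRingType) (a b c d : R) :
  - 3 * (18 * a * b * c * d + b ^+ 2 * c ^+ 2 - 4 * a * c ^+ 3
    - 4 * b ^+ 3 * d - 27 * a ^+ 2 * d ^+ 2) =
  (b * c - 9 * a * d) ^+ 2 - 4 * ((b ^+ 2 - 3 * a * c) * (c ^+ 2 - 3 * b * d)).
Proof.
rewrite !exprS !expr0 !mulr1.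
have [h2 [h3 [h4 [h9 [h18 h27]]]]] := nums R.
exact: (@gen_disc _ _ _ _ _ _ (cr_theory R) _ _ _ _ _ _ h2 h3 h4 h9 h18 h27).
Qed.

Lemma conic_rel (R : comPzRingType) (A B C D r : R) :
  B * B - 3 * A * C = 1 -> B * C - 9 * A * D = 0 -> C * C - 3 * B * D = r ->
  B * B - 1 = - (9 * A * A * r).
Proof.
move=> E1 E2 E3.
have [h2 [h3 [h4 [h9 [h18 h27]]]]] := nums R.
have := (@gen_conic _ _ _ _ _ _ (cr_theory R) _ _ _ _ _ _ h2 h3 h4 h9 h18 h27 A B C D r).
rewrite E1 E2 E3 !subrr mul0r !mulr0 ?oppr0 ?subr0 ?addr0 => /eqP.
by rewrite addr_eq0 => /eqP.
Qed.


Lemma structure (F : finFieldType) (h : F) (s : nat) (f : cubic_form F) :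
  (2%:R : F) != 0 -> (3%:R : F) != 0 -> counted h s f ->
  exists k : nat,
   [/\ s = (4 * k)%N, (size (fa f) <= k.+1)%N, (size (fb f) <= k.+1)%N,
       (size (fc f) <= k.+1)%N & (size (fd f) <= k.+1)%N] /\
   [/\ ~ is_square h,
       (fb f)`_k * (fb f)`_k - 3 * (fa f)`_k * (fc f)`_k = 1,
       (fb f)`_k * (fc f)`_k - 9 * (fa f)`_k * (fd f)`_k = 0 &
       4 * ((fc f)`_k * (fc f)`_k - 3 * (fb f)`_k * (fd f)`_k) = - h].
Proof.
move=> t2 t3.
rewrite /counted.
move=> [[[a0 _] [D0 Ds] [dga dgb] [dgad dgbc] _] [imun sgD] [pr1 pr2 pr3 pr4 pr5] szPR].
have eP : hessP f = fb f * fb f - 3 * fa f * fc f by rewrite /hessP expr2.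
have eR : hessR f = fc f * fc f - 3 * fb f * fd f by rewrite /hessR expr2.
have eD : - 3 * disc f = hessQ f ^+ 2 - 4 * (hessP f * hessR f).
  by rewrite /disc /hessQ /hessP /hessR disc_id.
move: imun sgD Ds dga dgb dgad dgbc pr1 pr2 pr3 pr4 pr5 szPR eP eR eD a0.
set a := fa f; set b := fb f; set c := fc f; set d := fd f.
set P := hessP f; set Q := hessQ f; set R := hessR f; set Dl := - 3 * disc f.
move=> imun sgD Ds dga dgb dgad dgbc pr1 pr2 pr3 pr4 pr5 szPR eP eR eD a0.
have P0 : P != 0.
  by apply/eqP => P0; move: pr1; rewrite P0 /absq eqxx ltn0.
have R0 : R != 0 by rewrite -size_poly_gt0 -szPR size_poly_gt0.
have lcP : lead_coef P = 1.
  by apply: pr4; rewrite /absq (negbTE P0) (negbTE R0) szPR.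
have szQ : (size Q < size P)%N.
  case: (eqVneq Q 0) => [->|Q0]; first by rewrite size_poly0 size_poly_gt0.
  move: pr1; rewrite /absq (negbTE P0) (negbTE Q0) ltn_exp2l ?finNzRing_gt1 //.
  have := size_poly_gt0 Q; rewrite Q0 => qq lt; nlia.
have n1 : (0 < size P)%N by rewrite size_poly_gt0.
have t4 : (4%:R : F) != 0.
  by rewrite (_ : 4%:R = 2%:R * 2%:R :> F) ?mulf_neq0 // -natrM.
have szPR' : size (4 * (P * R)) = (size P + size P).-1.
  by rewrite size_natmul // size_mul // -szPR.
have szQ2 : (size (Q ^+ 2) < (size P + size P).-1)%N.
  rewrite expr2; apply: leq_ltn_trans (size_polyMleq _ _) _; nlia.
have szD : size Dl = (size P + size P).-1.
  by rewrite eD addrC size_polyDl size_polyN // szPR'.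
have lcD : lead_coef Dl = - (4 * lead_coef R).
  by rewrite eD addrC lead_coefDl ?size_polyN ?szPR' // lead_coefN lead_natmul lead_coefM lcP mul1r.
have szdisc : size (disc f) = (size P + size P).-1.
  by rewrite -szD /Dl mulNr size_polyN size_natmul.
have sE : s = ((size P + size P).-1).-1 by rewrite -Ds szdisc.
have nonsq : ~ is_square h /\ - (4 * lead_coef R) = h.
  have ev : ~~ odd (size Dl).-1.
    rewrite szD; move: n1; move: (size P) => [|m] // _.
    by rewrite addSn /= addnS /= addnn odd_double.
  case: imun => [[_ od]|[_ [_ nsq]]]; first by move: od; rewrite (negbTE ev).
  case: sgD => e; move: nsq; rewrite e => nsq.
    by case: nsq; exists 1; rewrite expr1n.
  by split => //; rewrite -e /sgn lcD.
case: nonsq => nsq hr.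
have szmul3 : forall x : {poly F}, size (3 * x) = size x by move=> x; rewrite size_natmul.
have szmul9 : forall x : {poly F}, size (9 * x) = size x.
  move=> x; rewrite size_natmul // (_ : 9%:R = 3%:R * 3%:R :> F) ?mulf_neq0 //.
  by rewrite -natrM.
have X8 := size_mul_cases b b.
have X9 := size_mul_cases (3 * a) c; rewrite szmul3 in X9.
have X10 := size_mul_cases c c.
have X11 := size_mul_cases (3 * b) d; rewrite szmul3 in X11.
have Y12 : (size P <= size (b * b)%R)%N || (size P <= size (3 * a * c)%R)%N.
  by rewrite -leq_max; have := size_polyD (b * b)%R (- (3 * a * c))%R; rewrite size_polyN -eP.
have Y13 : (size (3 * a * c)%R <= size P)%N || (size (3 * a * c)%R <= size (b * b)%R)%N.
  rewrite -leq_max maxnC; have := size_polyD (b * b)%R (- P)%R.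
  by rewrite size_polyN eP opprB addrC subrK.
have Y14 : (size P <= size (c * c)%R)%N || (size P <= size (3 * b * d)%R)%N.
  by rewrite -leq_max; have := size_polyD (c * c)%R (- (3 * b * d))%R; rewrite size_polyN szPR -eR.
have Y15 : (size (c * c)%R <= size P)%N || (size (c * c)%R <= size (3 * b * d)%R)%N.
  by rewrite -leq_max; have := size_polyD R (3 * b * d)%R; rewrite szPR eR subrK.
have Y16 : (size (3 * b * d)%R <= size P)%N || (size (3 * b * d)%R <= size (c * c)%R)%N.
  rewrite -leq_max maxnC; have := size_polyD (c * c)%R (- R)%R.
  by rewrite size_polyN szPR eR opprB addrC subrK.
have [k [Hs [Ha [Hb [Hc Hd]]]]] : exists k, (s = 4 * k /\ size a <= k + 1 /\ size b <= k + 1 /\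
    size c <= k + 1 /\ size d <= k + 1)%coq_nat.
  apply: (numlem s (size P) (size a) (size b) (size c) (size d) (size (b * b)%R)
           (size (3 * a * c)%R) (size (c * c)%R) (size (3 * b * d)%R)).
  - by apply/leP.
  - by rewrite sE; nlia.
  - by apply/leP; rewrite size_poly_gt0.
  - by move: dga; rewrite /degle (negbTE a0) /= => hh1; nlia.
  - case: (eqVneq b 0) => [->|b0]; first by left; rewrite size_poly0.
    by right; move: dgb; rewrite /degle (negbTE b0) /= => hh1; nlia.
  - case: (eqVneq d 0) => [->|d0]; first by left; rewrite size_poly0.
    right; move: dgad; rewrite /degle mulf_eq0 (negbTE a0) (negbTE d0) /= size_mul //.
    have : (0 < size a)%N by rewrite size_poly_gt0.
    have : (0 < size d)%N by rewrite size_poly_gt0.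
    move=> hh1 hh2 hh3; move: hh1 hh2 hh3; move: (size a) (size d) => x y hh1 hh2 hh3; nlia.
  - case: (eqVneq b 0) => [->|b0]; first by left; rewrite size_poly0.
    case: (eqVneq c 0) => [->|c0]; first by right; left; rewrite size_poly0.
    right; right; move: dgbc; rewrite /degle mulf_eq0 (negbTE b0) (negbTE c0) /= size_mul //.
    have : (0 < size b)%N by rewrite size_poly_gt0.
    have : (0 < size c)%N by rewrite size_poly_gt0.
    move=> hh1 hh2 hh3; move: hh1 hh2 hh3; move: (size b) (size c) => x y hh1 hh2 hh3; nlia.
  - by clear -X8; move: X8; move: (size b) (size (b * b)%R) => x y X8; unfold addn in *; lia.
  - have /leP ha : (0 < size a)%N by rewrite size_poly_gt0.
    by clear -X9 ha; move: X9 ha; move: (size a) (size c) (size (3 * a * c)%R) => x y z X9 ha; unfold addn in *; lia.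
  - by clear -X10; move: X10; move: (size c) (size (c * c)%R) => x y X10; unfold addn in *; lia.
  - by clear -X11; move: X11; move: (size b) (size d) (size (3 * b * d)%R) => x y z X11; unfold addn in *; lia.
  - by case/orP: Y12 => /leP; [left|right].
  - by case/orP: Y13 => /leP; [left|right].
  - by case/orP: Y14 => /leP; [left|right].
  - by case/orP: Y15 => /leP; [left|right].
  - by case/orP: Y16 => /leP; [left|right].
have szP : size P = (k + k).+1.
  move: sE Hs n1; move: (size P) => m sE Hs n1; subst s; nlia.
have le1 : forall x : {poly F}, (size x <= k + 1)%coq_nat -> (size x <= k.+1)%N.
  by move=> x /leP; rewrite addn1.
have szR : size R = (k + k).+1 by rewrite -szPR.
exists k; split.
  by split; rewrite ?le1 //; apply/eqP; rewrite eqn_leq; apply/andP; split; apply/leP; lia.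
split => //.
- have : P`_(k + k) = 1 by rewrite -lcP lead_coefE szP.
  rewrite eP coefB coefM_mid ?le1 // coefM_mid ?szmul3 ?le1 //.
  by rewrite coef_natmul.
- have : Q`_(k + k) = 0 by rewrite nth_default // -ltnS -szP.
  by rewrite /Q /hessQ coefB coefM_mid ?le1 // coefM_mid ?szmul9 ?le1 // coef_natmul.
- have : R`_(k + k) = lead_coef R by rewrite lead_coefE szR.
  rewrite eR coefB coefM_mid ?le1 // coefM_mid ?szmul3 ?le1 // coef_natmul => ->.
  by rewrite -hr opprK.
Qed.


Lemma conic_of (F : fieldType) (h A B C D : F) :
  B * B - 3 * A * C = 1 -> B * C - 9 * A * D = 0 ->
  4 * (C * C - 3 * B * D) = - h -> 4 * (B * B - 1) = 9 * h * (A * A).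
Proof.
move=> E1 E2 E3.
rewrite (conic_rel E1 E2 (erefl _)).
have [h2 [h3 [h4 [h9 [h18 h27]]]]] := nums F.
rewrite (@gen_c2 _ _ _ _ _ _ (cr_theory F) _ _ _ _ _ _ h2 h3 h4 h9 h18 h27).
by rewrite E3 opprK.
Qed.

Lemma coefs_uniq (F : fieldType) (h A B C D C' D' : F) :
  (2%:R : F) != 0 -> (3%:R : F) != 0 ->
  B * B - 3 * A * C = 1 -> B * C - 9 * A * D = 0 -> 4 * (C * C - 3 * B * D) = - h ->
  B * B - 3 * A * C' = 1 -> B * C' - 9 * A * D' = 0 -> 4 * (C' * C' - 3 * B * D') = - h ->
  C = C' /\ D = D'.
Proof.
move=> t2 t3 E1 E2 E3 E1' E2' E3'.
have t4 : (4%:R : F) != 0.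
  by rewrite (_ : 4%:R = 2%:R * 2%:R :> F) ?mulf_neq0 // -natrM.
have t9 : (9%:R : F) != 0.
  by rewrite (_ : 9%:R = 3%:R * 3%:R :> F) ?mulf_neq0 // -natrM.
have e3 : C * C - 3 * B * D = C' * C' - 3 * B * D'.
  by apply: (mulfI t4); rewrite E3 E3'.
have [A0|A0] := eqVneq A 0.
  move: E1 E2 E2'; rewrite A0 !mulr0 !mul0r !subr0 => E1 E2 E2'.
  have B0 : B != 0 by apply/eqP => B0; move: E1; rewrite B0 mul0r => /eqP; rewrite eq_sym oner_eq0.
  have C0 : C = 0 by move/eqP: E2; rewrite mulf_eq0 (negbTE B0) => /eqP.
  have C0' : C' = 0 by move/eqP: E2'; rewrite mulf_eq0 (negbTE B0) => /eqP.
  split; first by rewrite C0 C0'.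
  move: e3; rewrite C0 C0' => /addrI /oppr_inj.
  by apply: mulfI; rewrite mulf_neq0.
have eC : C = C'.
  apply: (mulfI (mulf_neq0 t3 A0)); apply: oppr_inj; apply: (@addrI _ (B * B)).
  by rewrite E1 E1'.
split => //.
apply: (mulfI (mulf_neq0 t9 A0)).
by rewrite -(subr0_eq E2) -(subr0_eq E2') eC.
Qed.

Lemma conic_B (F : fieldType) (h B t : F) :
  4 * (B * B - 1) = 9 * h * ((t * (B + 1)) * (t * (B + 1))) -> B + 1 != 0 ->
  B * (4 - 9 * h * (t * t)) = 4 + 9 * h * (t * t).
Proof.
move=> e B1.
have [h2 [h3 [h4 [h9 [h18 h27]]]]] := nums F.
have := (@gen_c3 _ _ _ _ _ _ (cr_theory F) _ _ _ _ _ _ h2 h3 h4 h9 h18 h27 B t (9 * h)).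
rewrite e subrr => /esym /eqP; rewrite mulf_eq0 (negbTE B1) /= => /eqP e2.
have := (@gen_c4 _ _ _ _ _ _ (cr_theory F) _ _ _ _ _ _ h2 h3 h4 h9 h18 h27 B (9 * h * (t * t))).
by rewrite e2 => /eqP; rewrite subr_eq0 => /eqP.
Qed.

Definition conicset (F : finFieldType) (h : F) : {set F * F} :=
  [set x : F * F | 4 * (x.2 * x.2 - 1) == 9 * h * (x.1 * x.1)].

Lemma conic_card (F : finFieldType) (h : F) : (2%:R : F) != 0 -> (3%:R : F) != 0 ->
  ~ is_square h -> (#|conicset h| <= #|F|.+1)%N.
Proof.
move=> t2 t3 nsq.
have t4 : (4%:R : F) != 0.
  by rewrite (_ : 4%:R = 2%:R * 2%:R :> F) ?mulf_neq0 // -natrM.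
have t9 : (9%:R : F) != 0.
  by rewrite (_ : 9%:R = 3%:R * 3%:R :> F) ?mulf_neq0 // -natrM.
have h0 : h != 0 by apply/eqP => h0; apply: nsq; exists 0; rewrite h0 expr0n.
pose g (x : F * F) := if x.2 == -1 then None else Some (x.1 / (x.2 + 1)).
rewrite -card_option -(@card_in_imset _ _ g); first exact: max_card.
have A0of : forall A B : F, 4 * (B * B - 1) = 9 * h * (A * A) -> B = -1 -> A = 0.
  move=> A B e B1; move: e; rewrite B1 mulrNN mul1r subrr mulr0 => /esym /eqP.
  by rewrite !mulf_eq0 (negbTE t9) (negbTE h0) /= => /orP [] /eqP.
move=> [A B] [A' B']; rewrite !inE /= => /eqP e /eqP e'; rewrite /g /=.
case: (eqVneq B (-1)) => [hB|hB]; case: (eqVneq B' (-1)) => [hB'|hB'] //.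
  by rewrite (A0of _ _ e hB) (A0of _ _ e' hB') hB hB'.
move=> [] et.
have B1 : B + 1 != 0 by rewrite addr_eq0.
have B1' : B' + 1 != 0 by rewrite addr_eq0.
set t := A / (B + 1).
have eA : A = t * (B + 1) by rewrite /t divfK.
have eA' : A' = t * (B' + 1) by rewrite /t et divfK.
rewrite eA in e; rewrite eA' in e'.
have eB := conic_B e B1; have eB' := conic_B e' B1'.
have [K0|K0] := eqVneq (4 - 9 * h * (t * t)) 0.
  exfalso; apply: nsq.
  move/eqP: K0; rewrite subr_eq0 => /eqP K0.
  have t0 : t != 0 by apply/eqP => t0; move: K0; rewrite t0 !mulr0 => /eqP; rewrite (negbTE t4).
  have tt0 : 9 * (t * t) != 0 by do 2?apply: mulf_neq0.
  exists (2 / (3 * t)).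
  have [h2 [h3 [h4 [h9 [h18 h27]]]]] := nums F.
  have [c1 c2] := (@gen_c5 _ _ _ _ _ _ (cr_theory F) _ _ _ _ _ _ h2 h3 h4 h9 h18 h27 t).
  rewrite expr_div_n !expr2 c1 c2 K0.
  have -> : 9 * h * (t * t) = h * (9 * (t * t)) by rewrite mulrAC mulrC.
  by rewrite mulfK.
have eBB : B = B'.
  by apply: (mulIf K0); rewrite eB eB'.
by rewrite eA eA' eBB.
Qed.


Lemma poly_low_eq (F : fieldType) (k : nat) (p q : {poly F}) :
  (size p <= k.+1)%N -> (size q <= k.+1)%N -> p`_k = q`_k ->
  [tuple p`_i | i < k] = [tuple q`_i | i < k] -> p = q.
Proof.
move=> sp sq ek el; apply/polyP => i.
case: (ltngtP i k) => [lt|gt|->] //.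
  by have := congr1 (fun t => tnth t (Ordinal lt)) el; rewrite !tnth_mktuple.
by rewrite !nth_default // (leq_trans _ gt).
Qed.

Lemma poly_low_eqN (F : fieldType) (k : nat) (p q : {poly F}) :
  (size p <= k.+1)%N -> (size q <= k.+1)%N -> p`_k = - q`_k ->
  [tuple p`_i | i < k] = [tuple - tnth [tuple q`_i | i < k] i | i < k] -> p = - q.
Proof.
move=> sp sq ek el; apply: poly_low_eq; [exact: sp | by rewrite size_polyN | by rewrite coefN |].
by rewrite el; apply: eq_mktuple => i; rewrite tnth_mktuple coefN.
Qed.

Theorem mainTheorem15 (F : finFieldType) (h : F) :
  coprime #|F| 6 -> primitive_root h ->
  forall s : nat,
    ((s %% 4 == 0)%N ->
       forall l : seq (cubic_form F), uniq l -> (forall f, f \in l -> counted h s f) ->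
       (2 * size l <= #|F|.+1 * #|F| ^ s)%N) /\
    ((s %% 4 != 0)%N -> forall f : cubic_form F, ~ counted h s f).
Proof.
move=> cop ph s.
have [t2 t3] := char23 cop.
split; last first.
  move=> sn f cf; have [k [[Hs _ _ _ _] _]] := structure t2 t3 cf.
  by move: sn; rewrite Hs mulnC modnMl.
move=> s4 l ul cl.
have sk : s = (4 * (s %/ 4))%N by rewrite {1}(divn_eq s 4) (eqP s4) addn0 mulnC.
move: sk; set k := (s %/ 4)%N => sk.
have st : forall f, f \in l ->
   [/\ (size (fa f) <= k.+1)%N, (size (fb f) <= k.+1)%N,
       (size (fc f) <= k.+1)%N & (size (fd f) <= k.+1)%N] /\
   [/\ ~ is_square h,
       (fb f)`_k * (fb f)`_k - 3 * (fa f)`_k * (fc f)`_k = 1,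
       (fb f)`_k * (fc f)`_k - 9 * (fa f)`_k * (fd f)`_k = 0 &
       4 * ((fc f)`_k * (fc f)`_k - 3 * (fb f)`_k * (fd f)`_k) = - h].
  move=> f fl; have [k' [[Hs H1 H2 H3 H4] E]] := structure t2 t3 (cl f fl).
  have kk : k' = k by apply/eqP; rewrite -(eqn_pmul2l (isT : (0 < 4)%N)) -Hs -sk.
  by rewrite -kk.
have sgS : forall f, f \in l -> inS h (sgn (fa f)).
  by move=> f fl; have [[_ _ _ _ ?] _ _ _] := cl f fl.
case: (l =P [::]) => [->|ln]; first by [].
have [f0 f0l] : exists f0, f0 \in l by case: l ln {ul cl st sgS} => // f0 l' _; exists f0; rewrite mem_head.
have nsq : ~ is_square h by have [_ [? _ _ _]] := st f0 f0l.
pose V := (k.-tuple F * k.-tuple F * k.-tuple F * k.-tuple F)%type.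
pose low (p : {poly F}) : k.-tuple F := [tuple p`_i | i < k].
pose phi (f : cubic_form F) : (F * F) * V :=
  (((fa f)`_k, (fb f)`_k), (low (fa f), low (fb f), low (fc f), low (fd f))).
pose negA (u : (F * F) * V) : (F * F) * V :=
  ((- u.1.1, u.1.2), ([tuple - tnth u.2.1.1.1 i | i < k], u.2.1.1.2, u.2.1.2, u.2.2)).
pose W := setX (conicset h) [set: V].
pose Y := [set u in map phi l].
pose Yn := negA @: Y.
have negAK : involutive negA.
  move=> [[A B] [[[ta tb] tc] td]]; rewrite /negA /= opprK; congr (_, (_, _, _, _)).
  by apply: eq_from_tnth => i; rewrite !tnth_mktuple opprK.
have inj : {in l &, injective phi}.
  move=> f g fl gl; have [[sa sb sc sd] [_ E1 E2 E3]] := st f fl.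
  have [[sa' sb' sc' sd'] [_ E1' E2' E3']] := st g gl.
  case=> eA eB ea eb ec ed.
  move: E1' E2' E3'; rewrite -eA -eB => E1' E2' E3'.
  have [eC eD] := coefs_uniq t2 t3 E1 E2 E3 E1' E2' E3'.
  have ea' : low (fa f) = low (fa g) by apply: val_inj.
  have eb' : low (fb f) = low (fb g) by apply: val_inj.
  have ec' : low (fc f) = low (fc g) by apply: val_inj.
  have ed' : low (fd f) = low (fd g) by apply: val_inj.
  move: (poly_low_eq sa sa' eA ea') (poly_low_eq sb sb' eB eb').
  move: (poly_low_eq sc sc' eC ec') (poly_low_eq sd sd' eD ed').
  by clear -fl gl; case: f fl => [[[a b] c] d] _;
     case: g gl => [[[a' b'] c'] d'] _; rewrite /fa /fb /fc /fd /= => -> -> -> ->.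
have cY : #|Y| = size l.
  by rewrite cardsE -(size_map phi); apply/card_uniqP; rewrite (map_inj_in_uniq inj).
have inW : forall f, f \in l -> phi f \in W.
  move=> f fl; have [_ [_ E1 E2 E3]] := st f fl.
  rewrite in_setX in_setT andbT inE /=; apply/eqP.
  exact: conic_of E1 E2 E3.
have sYW : Y \subset W.
  by apply/subsetP => u; rewrite inE => /mapP [f fl ->]; apply: inW.
have sYnW : Yn \subset W.
  apply/subsetP => u /imsetP [v]; rewrite inE => /mapP [f fl ->] ->.
  have := inW f fl; rewrite !in_setX !in_setT !andbT !inE /=.
  by rewrite mulrNN.
have dis : Y :&: Yn = set0.
  apply/setP => u; rewrite !inE; apply/negP => /andP [].
  move=> /mapP [f fl ->] /imsetP [v]; rewrite inE => /mapP [g gl ->].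
  rewrite /phi /negA /= => -[eA _ ea _ _ _].
  have [[sa _ _ _] _] := st f fl; have [[sa' _ _ _] _] := st g gl.
  have ea' : low (fa f) = [tuple - tnth (low (fa g)) i | i < k] by apply: val_inj.
  have efg := poly_low_eqN sa sa' eA ea'.
  apply: (inS_opp ph t2 (sgS g gl)).
  by rewrite /sgn -lead_coefN -efg; apply: sgS.
have cYn : #|Yn| = #|Y| by rewrite card_imset //; apply: can_inj negAK.
have cW : #|W| = (#|conicset h| * #|F| ^ s)%N.
  rewrite cardsX cardsT !card_prod !card_tuple sk -!expnD.
  by congr (_ * (_ ^ _))%N; rewrite !mulSn mul0n addn0 !addnA.
have : (#|Y| + #|Yn| <= #|W|)%N.
  by rewrite -cardsUI dis cards0 addn0 subset_leq_card // subUset sYW sYnW.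
rewrite cYn cY cW mul2n -addnn => le.
apply: leq_trans le _; rewrite leq_mul2r conic_card ?orbT //.
Qed.
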